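(* For every $p\in[2,\infty]$, \[ D_{p,\infty}=C_{p,\infty}=\mathrm{A}_{\frac{p}{p-1}}, \] (with $\frac{p}{p-1}=1$ when $p=\infty$); equivalently, for every $p\in[1,2]$, $D_{p^*,\infty}=C_{p^*,\infty}=\mathrm{A}_p$.
   Context: Scalars are real. $X_q=\ell_q$ for $1\le q<\infty$, $X_\infty=c_0$, $(e_k)$ canonical unit vectors, $\|T\|$ the sup norm of a bilinear form over the product of unit balls. $r_j(t)=\operatorname{sign}(\sin(2^j\pi t))$ are the Rademacher functions. For $0<r<\infty$, $\mathrm{A}_r$ is the optimal constant in the Khintchine inequality $\left(\sum_{j=1}^n|a_j|^2\right)^{1/2}\le \mathrm{A}_r\left(\int_0^1|\sum_{j=1}^n a_jr_j(t)|^rdt\right)^{1/r}$ for all $n$ and real $a_j$. For $p\in[2,\infty]$: $C_{p,\infty}$ is the optimal $C$ with $\left(\sum_{i}\left(\sum_{j}|T(e_i,e_j)|^2\right)^{\frac{p}{2(p-1)}}\right)^{\frac{p-1}{p}}\le C\|T\|$, and $D_{p,\infty}$ the optimal $D$ with $\left(\sum_{j}\left(\sum_{i}|T(e_i,e_j)|^{\frac{p}{p-1}}\right)^{2\frac{p-1}{p}}\right)^{1/2}\le D\|T\|$, both for all continuous bilinear $T:X_p\times X_\infty\to\mathbb{R}$. *)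

(* Defs.v *)
From Stdlib Require Import Reals Lra.
Open Scope R_scope.

Inductive ext : Type := Fin (p : R) | Inf.

Definition p_ge2 (p : ext) : Prop :=
  match p with Fin q => 2 <= q | Inf => True end.

(** Power x^r for x >= 0 and r > 0, with the convention 0^r = 0
    (Stdlib's Rpower 0 r = 1, which is wrong for this purpose). *)
Definition rpow (x r : R) : R :=
  if Req_EM_T x 0 then 0 else Rpower x r.

Fixpoint sumN (N : nat) (f : nat -> R) : R :=
  match N with O => 0 | S n => sumN n f + f n end.

Definition sign (x : R) : R :=
  if Rlt_dec 0 x then 1 else if Rlt_dec x 0 then -1 else 0.
Definition rad (j : nat) (t : R) : R := sign (sin (2 ^ j * PI * t)).

Definition khintchine_ineq (r A : R) : Prop :=
  forall (n : nat) (a : nat -> R)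
    (pr : Riemann_integrable
            (fun t => rpow (Rabs (sumN n (fun k => a (S k) * rad (S k) t))) r) 0 1),
    sqrt (sumN n (fun k => Rabs (a (S k)) ^ 2))
      <= A * rpow (RiemannInt pr) (1 / r).

Definition is_optimal (P : R -> Prop) (A : R) : Prop :=
  P A /\ forall A', P A' -> A <= A'.

Definition seqR := nat -> R.
Definition sadd (x y : seqR) : seqR := fun i => x i + y i.
Definition sscal (a : R) (x : seqR) : seqR := fun i => a * x i.
Definition sopp (x : seqR) : seqR := fun i => - x i.

Definition in_X (p : ext) (x : seqR) : Prop :=
  match p with
  | Fin q => exists B, forall N, sumN N (fun i => rpow (Rabs (x i)) q) <= B
  | Inf => Un_cv x 0
  end.

Definition norm_le (p : ext) (x : seqR) (r : R) : Prop :=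
  0 <= r /\
  match p with
  | Fin q => forall N, sumN N (fun i => rpow (Rabs (x i)) q) <= rpow r q
  | Inf => forall i, Rabs (x i) <= r
  end.

Definition in_ball (p : ext) (x : seqR) : Prop := in_X p x /\ norm_le p x 1.

Definition e (k : nat) : seqR := fun i => if Nat.eq_dec i k then 1 else 0.

Definition bilinear (p : ext) (T : seqR -> seqR -> R) : Prop :=
  (forall x z y a, in_X p x -> in_X p z -> in_X Inf y ->
     T (sadd x (sscal a z)) y = T x y + a * T z y) /\
  (forall x y w a, in_X p x -> in_X Inf y -> in_X Inf w ->
     T x (sadd y (sscal a w)) = T x y + a * T x w).

Definition continuous_bil (p : ext) (T : seqR -> seqR -> R) : Prop :=
  forall x y, in_X p x -> in_X Inf y ->
  forall eps, 0 < eps -> exists delta, 0 < delta /\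
    forall x' y', in_X p x' -> in_X Inf y' ->
      norm_le p (sadd x' (sopp x)) delta -> norm_le Inf (sadd y' (sopp y)) delta ->
      Rabs (T x' y' - T x y) < eps.

Definition bil_norm (p : ext) (T : seqR -> seqR -> R) (m : R) : Prop :=
  is_lub (fun v => exists x y, in_ball p x /\ in_ball Inf y /\ v = Rabs (T x y)) m.

Definition ex1 (p : ext) : R := match p with Fin q => q / (2 * (q - 1)) | Inf => 1 / 2 end.
Definition ex2 (p : ext) : R := match p with Fin q => (q - 1) / q | Inf => 1 end.
Definition ex3 (p : ext) : R := match p with Fin q => q / (q - 1) | Inf => 1 end.
Definition ex4 (p : ext) : R := match p with Fin q => 2 * (q - 1) / q | Inf => 2 end.

(** The infinite sums of nonnegative terms are expressed through all finite
    truncations i < N, j < M (a nonnegative series converges with sum <= b iff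
    all partial sums are <= b; all maps involved are monotone). *)
Definition C_ineq (p : ext) (C : R) : Prop :=
  forall T m, bilinear p T -> continuous_bil p T -> bil_norm p T m ->
  forall N M,
    rpow (sumN N (fun i => rpow (sumN M (fun j => Rabs (T (e i) (e j)) ^ 2)) (ex1 p)))
         (ex2 p) <= C * m.

Definition D_ineq (p : ext) (D : R) : Prop :=
  forall T m, bilinear p T -> continuous_bil p T -> bil_norm p T m ->
  forall N M,
    rpow (sumN M (fun j => rpow (sumN N (fun i => rpow (Rabs (T (e i) (e j))) (ex3 p)))
                                (ex4 p)))
         (1 / 2) <= D * m.

(* Main.v *)
Require Import Defs.
From Stdlib Require Import Reals Lra Lia FunctionalExtensionality.
From Coquelicot Require Import Coquelicot.
Open Scope R_scope.

Definition cns (c : R) (eps : nat -> R) : nat -> R :=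
  fun k => match k with O => c | S k => eps k end.

Fixpoint Eavg (n : nat) (H : (nat -> R) -> R) : R :=
  match n with
  | O => H (fun _ => 0)
  | S n => (Eavg n (fun eps => H (cns 1 eps)) + Eavg n (fun eps => H (cns (-1) eps))) / 2
  end.

Definition dep (n : nat) (H : (nat -> R) -> R) : Prop :=
  forall eps eps', (forall k, (k < n)%nat -> eps k = eps' k) -> H eps = H eps'.

Lemma dep_cns n H c : dep (S n) H -> dep n (fun eps => H (cns c eps)).
Proof.
  intros D e1 e2 He. apply D. intros [|k] Hk; simpl; auto. apply He; lia.
Qed.

Ltac destruct_if := match goal with |- context [if ?c then _ else _] => destruct c end.

Lemma rad_SS k t : rad (S (S k)) t = rad (S k) (2 * t).
Proof. unfold rad. f_equal. f_equal. simpl. ring. Qed.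

Lemma rad_SS' k t : rad (S (S k)) t = rad (S k) (2 * t - 1).
Proof.
  unfold rad. f_equal.
  replace (2 ^ S (S k) * PI * t) with (2 ^ S k * PI * (2 * t - 1) + 2 * INR (2 ^ k) * PI).
  - rewrite sin_period. reflexivity.
  - rewrite pow_INR. replace (INR 2) with 2 by (simpl; ring).
    change (2 ^ S (S k)) with (2 * (2 * 2 ^ k)). change (2 ^ S k) with (2 * 2 ^ k).
    set (z := 2 ^ k). ring.
Qed.

Lemma rad1_pos t : 0 < t < 1/2 -> rad 1 t = 1.
Proof.
  intros Ht. unfold rad, Defs.sign.
  assert (0 < sin (2 ^ 1 * PI * t)) by (apply sin_gt_0; simpl; pose proof PI_RGT_0; nra).
  destruct_if; [auto|lra].
Qed.

Lemma rad1_neg t : 1/2 < t < 1 -> rad 1 t = -1.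
Proof.
  intros Ht. unfold rad, Defs.sign.
  assert (sin (2 ^ 1 * PI * t) < 0) by (apply sin_lt_0; simpl; pose proof PI_RGT_0; nra).
  destruct_if; [lra|].
  destruct_if; [auto|lra].
Qed.

Lemma rad_integral n : forall H, dep n H ->
  is_RInt (fun t => H (fun k => rad (S k) t)) 0 1 (Eavg n H).
Proof.
  induction n as [|n IH]; intros H D; simpl.
  - assert (C := is_RInt_const 0 1 (H (fun _ => 0))).
    unfold scal in C; simpl in C; unfold mult in C; simpl in C.
    rewrite Rminus_0_r, Rmult_1_l in C.
    eapply is_RInt_ext; [|exact C].
    intros x _. simpl. apply D. intros k Hk; lia.
  - pose proof (IH _ (dep_cns n H 1 D)) as I1.
    pose proof (IH _ (dep_cns n H (-1) D)) as I2.
    assert (J1 : is_RInt (fun t => H (fun k => rad (S k) t)) 0 (1/2) (Eavg n (fun eps => H (cns 1 eps)) / 2)).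
    { assert (A := is_RInt_comp_lin _ 2 0 0 (1/2) _ (ltac:(replace (2*0+0) with 0 by ring; replace (2*(1/2)+0) with 1 by field; exact I1))).
      apply (is_RInt_scal _ _ _ (1/2)) in A.
      unfold scal in A; simpl in A; unfold mult in A; simpl in A.
      replace (1/2 * Eavg n (fun eps => H (cns 1 eps))) with (Eavg n (fun eps => H (cns 1 eps)) / 2) in A by field.
      eapply is_RInt_ext; [|exact A].
      - intros x Hx. rewrite Rmin_left in Hx by lra. rewrite Rmax_right in Hx by lra. cbv beta.
        replace (1/2 * (2 * H (cns 1 (fun k => rad (S k) (2 * x + 0))))) with (H (cns 1 (fun k => rad (S k) (2 * x + 0)))) by field.
        f_equal. apply functional_extensionality. intros [|k]; simpl.
        + rewrite rad1_pos; auto.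
        + rewrite rad_SS. f_equal; ring.
}
    assert (J2 : is_RInt (fun t => H (fun k => rad (S k) t)) (1/2) 1 (Eavg n (fun eps => H (cns (-1) eps)) / 2)).
    { assert (A := is_RInt_comp_lin _ 2 (-1) (1/2) 1 _ (ltac:(replace (2*(1/2)+ -1) with 0 by field; replace (2*1+ -1) with 1 by ring; exact I2))).
      apply (is_RInt_scal _ _ _ (1/2)) in A.
      unfold scal in A; simpl in A; unfold mult in A; simpl in A.
      replace (1/2 * Eavg n (fun eps => H (cns (-1) eps))) with (Eavg n (fun eps => H (cns (-1) eps)) / 2) in A by field.
      eapply is_RInt_ext; [|exact A].
      - intros x Hx. rewrite Rmin_left in Hx by lra. rewrite Rmax_right in Hx by lra. cbv beta.
        replace (1/2 * (2 * H (cns (-1) (fun k => rad (S k) (2 * x + -1))))) with (H (cns (-1) (fun k => rad (S k) (2 * x + -1)))) by field.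
        f_equal. apply functional_extensionality. intros [|k]; simpl.
        + rewrite rad1_neg; auto.
        + rewrite rad_SS'. f_equal; ring.
}
    pose proof (is_RInt_Chasles _ _ _ _ _ _ J1 J2) as J.
    replace ((Eavg n (fun eps => H (cns 1 eps)) + Eavg n (fun eps => H (cns (-1) eps))) / 2)
      with (plus (Eavg n (fun eps => H (cns 1 eps)) / 2) (Eavg n (fun eps => H (cns (-1) eps)) / 2)).
    exact J. unfold plus; simpl. field.
Qed.

Lemma rad_RiemannInt n H (D : dep n H) (pr : Riemann_integrable (fun t => H (fun k => rad (S k) t)) 0 1) :
  RiemannInt pr = Eavg n H.
Proof. rewrite <- RInt_Reals. apply is_RInt_unique. apply rad_integral; auto. Qed.

Lemma rad_integrable n H (D : dep n H) : Riemann_integrable (fun t => H (fun k => rad (S k) t)) 0 1.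
Proof. apply ex_RInt_Reals_0. eexists. apply rad_integral; eauto. Qed.
Require Import Defs.
From Stdlib Require Import Reals Lra Lia FunctionalExtensionality.
Open Scope R_scope.

Lemma div_ge0 a b : 0 <= a -> 0 < b -> 0 <= a / b.
Proof. intros. unfold Rdiv. apply Rmult_le_pos; auto. left; apply Rinv_0_lt_compat; auto. Qed.
Lemma div_gt0 a b : 0 < a -> 0 < b -> 0 < a / b.
Proof. intros. unfold Rdiv. apply Rmult_lt_0_compat; auto. apply Rinv_0_lt_compat; auto. Qed.

Lemma rpow_0 r : rpow 0 r = 0.
Proof. unfold rpow. destruct Req_EM_T; [auto|lra]. Qed.

Lemma rpow_pos x r : 0 < x -> rpow x r = Rpower x r.
Proof. intros H. unfold rpow. destruct Req_EM_T; [lra|auto]. Qed.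

Lemma Rpower_pos x r : 0 < Rpower x r.
Proof. unfold Rpower. apply exp_pos. Qed.

Lemma rpow_ge0 x r : 0 <= rpow x r.
Proof. unfold rpow. destruct Req_EM_T; [lra|]. left; apply Rpower_pos. Qed.

Lemma rpow_gt0 x r : 0 < x -> 0 < rpow x r.
Proof. intros H; rewrite rpow_pos by auto; apply Rpower_pos. Qed.

Lemma rpow_eq0 x r : 0 <= x -> rpow x r = 0 -> x = 0.
Proof. intros H E. destruct H as [H|H]; auto. pose proof (rpow_gt0 x r H). lra. Qed.

Lemma rpow_mult x a b : 0 <= x -> rpow (rpow x a) b = rpow x (a * b).
Proof.
  intros [H|H].
  - rewrite (rpow_pos x a H), (rpow_pos x (a*b) H), rpow_pos by apply Rpower_pos.
    rewrite Rpower_mult. auto.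
  - subst. rewrite !rpow_0. auto.
Qed.

Lemma rpow_mul x y r : 0 <= x -> 0 <= y -> rpow (x * y) r = rpow x r * rpow y r.
Proof.
  intros [H|H] [H'|H'].
  - rewrite !rpow_pos by nra. rewrite Rpower_mult_distr; auto.
  - subst. rewrite Rmult_0_r, !rpow_0. ring.
  - subst. rewrite Rmult_0_l, !rpow_0. ring.
  - subst. rewrite Rmult_0_l, !rpow_0. ring.
Qed.

Lemma rpow_1 x : 0 <= x -> rpow x 1 = x.
Proof. intros [H|H]. rewrite rpow_pos, Rpower_1; auto. subst; apply rpow_0. Qed.

Lemma rpow_plus x a b : 0 < x -> rpow x (a + b) = rpow x a * rpow x b.
Proof. intros H. rewrite !rpow_pos by auto. apply Rpower_plus. Qed.

Lemma rpow_le x y r : 0 <= x <= y -> 0 <= r -> rpow x r <= rpow y r.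
Proof.
  intros [[H|H] H1] Hr.
  - rewrite !rpow_pos by lra. apply Rle_Rpower_l; lra.
  - subst. rewrite rpow_0. apply rpow_ge0.
Qed.

Lemma rpow_lt x y r : 0 <= x < y -> 0 < r -> rpow x r < rpow y r.
Proof.
  intros [[H|H] H1] Hr.
  - rewrite !rpow_pos by lra. apply Rlt_Rpower_l; lra.
  - subst. rewrite rpow_0. apply rpow_gt0. lra.
Qed.

Lemma rpow_le_inv x y r : 0 <= x -> 0 <= y -> 0 < r -> rpow x r <= rpow y r -> x <= y.
Proof.
  intros Hx Hy Hr H. destruct (Rle_lt_dec x y) as [h|h]; auto.
  pose proof (rpow_lt y x r (conj Hy h) Hr). lra.
Qed.

Lemma rpow_inv x r : 0 <= x -> 0 < r -> rpow (rpow x r) (/ r) = x.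
Proof. intros Hx Hr. rewrite rpow_mult by auto. rewrite Rinv_r by lra. apply rpow_1; auto. Qed.

Lemma rpow_2 x : 0 <= x -> rpow x 2 = x ^ 2.
Proof.
  intros [H|H]. rewrite rpow_pos by auto. replace 2 with (INR 2) by (simpl; ring).
  rewrite Rpower_pow by auto. simpl; ring. subst. rewrite rpow_0. simpl; ring.
Qed.

Lemma rpow_half x : 0 <= x -> rpow x (1/2) = sqrt x.
Proof.
  intros [H|H]. rewrite rpow_pos by auto. replace (1/2) with (/2) by field. apply Rpower_sqrt; auto.
  subst. rewrite rpow_0, sqrt_0. auto.
Qed.

Lemma rpow_0r x : 0 < x -> rpow x 0 = 1.
Proof. intros H; rewrite rpow_pos by auto. apply Rpower_O; auto. Qed.

Lemma ln_le u : 0 < u -> ln u <= u - 1.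
Proof. intros H. pose proof (exp_ineq1_le (ln u)). rewrite exp_ln in H0; lra. Qed.

Lemma tangent1 r u : 1 <= r -> 0 <= u -> 1 + r * (u - 1) <= rpow u r.
Proof.
  intros Hr [Hu|Hu].
  - rewrite rpow_pos by auto.
    replace (Rpower u r) with (u * Rpower u (r - 1)).
    2:{ replace r with (1 + (r - 1)) at 2 by ring. rewrite Rpower_plus, Rpower_1; auto. }
    assert (E1 : 1 + (r - 1) * ln u <= Rpower u (r - 1)) by (unfold Rpower; apply exp_ineq1_le).
    assert (E2 : 1 - / u <= ln u).
    { pose proof (ln_le (/ u) (Rinv_0_lt_compat _ Hu)). rewrite ln_Rinv in H; auto. lra. }
    assert (E3 : u - 1 <= u * ln u).
    { apply Rmult_le_compat_l with (r := u) in E2; [|lra].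
      replace (u * (1 - / u)) with (u - 1) in E2 by (field; lra). lra. }
    assert (u * (1 + (r - 1) * ln u) <= u * Rpower u (r - 1)) by (apply Rmult_le_compat_l; lra).
    nra.
  - subst. rewrite rpow_0. lra.
Qed.

Lemma tangent r c u : 1 <= r -> 0 < c -> 0 <= u ->
  rpow c r + r * rpow c (r - 1) * (u - c) <= rpow u r.
Proof.
  intros Hr Hc Hu.
  assert (E : u = c * (u / c)) by (field; lra).
  rewrite E at 2. rewrite rpow_mul by (try lra; apply div_ge0; lra).
  pose proof (tangent1 r (u / c) Hr ltac:(apply div_ge0; lra)).
  assert (Ec : rpow c r = rpow c (r - 1) * c).
  { replace r with ((r - 1) + 1) at 1 by ring. rewrite rpow_plus, rpow_1; lra. }
  assert (P : 0 < rpow c r) by (apply rpow_gt0; auto).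
  apply Rmult_le_compat_l with (r := rpow c r) in H; [|lra].
  replace (rpow c r * (1 + r * (u / c - 1))) with (rpow c r + r * (rpow c r / c) * (u - c)) in H by (field; lra).
  replace (rpow c r / c) with (rpow c (r - 1)) in H by (rewrite Ec; field; lra). lra.
Qed.

Lemma rpow_convex r a b l : 1 <= r -> 0 <= a -> 0 <= b -> 0 <= l <= 1 ->
  rpow (l * a + (1 - l) * b) r <= l * rpow a r + (1 - l) * rpow b r.
Proof.
  intros Hr Ha Hb Hl. set (z := l * a + (1 - l) * b).
  assert (Hz : 0 <= z) by (unfold z; nra).
  destruct Hz as [Hz|Hz].
  - pose proof (tangent r z a Hr Hz Ha). pose proof (tangent r z b Hr Hz Hb).
    assert (l * (a - z) + (1 - l) * (b - z) = 0) by (unfold z; ring).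
    set (K := r * rpow z (r - 1)) in *.
    assert (l * (rpow z r + K * (a - z)) + (1 - l) * (rpow z r + K * (b - z)) = rpow z r).
    { replace (l * (rpow z r + K * (a - z)) + (1 - l) * (rpow z r + K * (b - z)))
        with (rpow z r + K * (l * (a - z) + (1 - l) * (b - z))) by ring. rewrite H1. ring. }
    nra.
  - rewrite <- Hz, rpow_0. pose proof (rpow_ge0 a r). pose proof (rpow_ge0 b r). nra.
Qed.

Lemma young p q x y : 1 < p -> 1/p + 1/q = 1 -> 0 <= x -> 0 <= y ->
  x * y <= rpow x p / p + rpow y q / q.
Proof.
  intros Hp Hpq Hx Hy.
  assert (Hq1 : 1 / q = (p - 1) / p) by (replace ((p-1)/p) with (1 - 1/p) by (field; lra); lra).
  assert (Pq : 0 < (p - 1) / p) by (apply div_gt0; lra).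
  assert (Hq0 : q <> 0).
  { intro Q. rewrite Q in Hq1. unfold Rdiv in Hq1 at 1. rewrite Rinv_0, Rmult_0_r in Hq1. lra. }
  assert (Hq : q = p / (p - 1)).
  { replace q with (1 / (1 / q)) by (field; auto). rewrite Hq1. field. lra. }
  destruct Hy as [Hy|Hy].
  - set (c := rpow y (q - 1)).
    assert (Hc : 0 < c) by (apply rpow_gt0; auto).
    pose proof (tangent p c x ltac:(lra) Hc Hx).
    assert (E1 : rpow c (p - 1) = y).
    { unfold c. rewrite rpow_mult by lra. replace ((q - 1) * (p - 1)) with 1 by (rewrite Hq; field; lra).
      apply rpow_1; lra. }
    assert (E2 : rpow c p = rpow y q).
    { unfold c. rewrite rpow_mult by lra. f_equal. rewrite Hq; field; lra. }
    assert (E3 : c = rpow y q / y).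
    { unfold c. replace q with ((q - 1) + 1) at 2 by ring. rewrite rpow_plus, rpow_1 by lra. field; lra. }
    rewrite E1, E2 in H.
    assert (H' : rpow y q + p * y * x - p * rpow y q <= rpow x p).
    { replace (rpow y q + p * y * x - p * rpow y q) with (rpow y q + p * y * (x - c)); [lra|].
      rewrite E3. field. lra. }
    assert (1 / q = (p - 1) / p) by (rewrite Hq; field; lra).
    replace (rpow y q / q) with (rpow y q * (1 / q)) by (field; auto).
    rewrite H0.
    apply Rmult_le_compat_l with (r := / p) in H'; [|left; apply Rinv_0_lt_compat; lra].
    replace (/ p * (rpow y q + p * y * x - p * rpow y q)) with (x * y - rpow y q * ((p - 1) / p)) in H' by (field; lra).
    unfold Rdiv at 1. lra.
  - subst. rewrite Rmult_0_r, rpow_0. pose proof (rpow_ge0 x p).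
    assert (0 <= rpow x p / p) by (apply div_ge0; lra). lra.
Qed.
Lemma sumN_ext n f g : (forall i, (i < n)%nat -> f i = g i) -> sumN n f = sumN n g.
Proof. induction n; simpl; intros H; auto. rewrite IHn, H; auto. Qed.

Lemma sumN_le n f g : (forall i, (i < n)%nat -> f i <= g i) -> sumN n f <= sumN n g.
Proof. induction n; simpl; intros H; [lra|]. pose proof (H n ltac:(lia)). pose proof (IHn ltac:(auto)). lra. Qed.

Lemma sumN_ge0 n f : (forall i, (i < n)%nat -> 0 <= f i) -> 0 <= sumN n f.
Proof. intros H. replace 0 with (sumN n (fun _ => 0)). apply sumN_le; auto. induction n; simpl; auto. rewrite IHn; auto. ring. Qed.

Lemma sumN_plus n f g : sumN n (fun i => f i + g i) = sumN n f + sumN n g.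
Proof. induction n; simpl; [ring|]. rewrite IHn; ring. Qed.

Lemma sumN_scal n c f : sumN n (fun i => c * f i) = c * sumN n f.
Proof. induction n; simpl; [ring|]. rewrite IHn; ring. Qed.

Lemma sumN_zero n : sumN n (fun _ => 0) = 0.
Proof. induction n; simpl; auto. rewrite IHn; ring. Qed.

Lemma sumN_abs n f : Rabs (sumN n f) <= sumN n (fun i => Rabs (f i)).
Proof. induction n; simpl. rewrite Rabs_R0; lra. eapply Rle_trans; [apply Rabs_triang|]. lra. Qed.

Lemma sumN_first n f : sumN (S n) f = f O + sumN n (fun k => f (S k)).
Proof. induction n; simpl in *; [ring|]. rewrite IHn. ring. Qed.

Lemma sumN_swap n m (f : nat -> nat -> R) :
  sumN n (fun i => sumN m (fun j => f i j)) = sumN m (fun j => sumN n (fun i => f i j)).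
Proof.
  induction n; simpl. rewrite sumN_zero; auto. rewrite IHn, <- sumN_plus. auto.
Qed.

Lemma sumN_const n c : sumN n (fun _ => c) = INR n * c.
Proof. induction n; simpl sumN. simpl; ring. rewrite IHn, S_INR. ring. Qed.

Lemma sumN_ge_term n f i : (forall k, (k < n)%nat -> 0 <= f k) -> (i < n)%nat -> f i <= sumN n f.
Proof.
  induction n; intros H Hi; [lia|]. simpl.
  destruct (Nat.eq_dec i n).
  - subst. pose proof (sumN_ge0 n f ltac:(intros; apply H; lia)). lra.
  - pose proof (IHn ltac:(intros; apply H; lia) ltac:(lia)). pose proof (H n ltac:(lia)). lra.
Qed.

Lemma sumN_eq0 n f : (forall k, (k < n)%nat -> 0 <= f k) -> sumN n f = 0 -> forall i, (i < n)%nat -> f i = 0.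
Proof.
  intros H S i Hi. pose proof (sumN_ge_term n f i H Hi). pose proof (H i Hi). lra.
Qed.

Lemma rpow_1l r : rpow 1 r = 1.
Proof. rewrite rpow_pos by lra. unfold Rpower. rewrite ln_1, Rmult_0_r, exp_0. auto. Qed.

Lemma rpow_abs_le1 x q : 0 < q -> rpow (Rabs x) q <= 1 -> Rabs x <= 1.
Proof. intros Hq H. apply (rpow_le_inv _ _ q); try lra; [apply Rabs_pos|]. rewrite rpow_1l; auto. Qed.

Lemma sumN_mono K L f : (K <= L)%nat -> (forall i, 0 <= f i) -> sumN K f <= sumN L f.
Proof. intros HKL Hf. induction HKL; [lra|]. simpl. pose proof (Hf m). lra. Qed.

Lemma sumN_zero_tail N L f : (N <= L)%nat -> (forall i, (N <= i)%nat -> f i = 0) -> sumN L f = sumN N f.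
Proof. intros HNL Hf. induction HNL; auto. simpl. rewrite IHHNL, Hf by lia. ring. Qed.

Definition trunc (N : nat) (x : seqR) : seqR := fun i => if Compare_dec.lt_dec i N then x i else 0.

Lemma in_X_trunc p N x : in_X p (trunc N x).
Proof.
  destruct p as [q|]; simpl.
  - exists (sumN N (fun i => rpow (Rabs (trunc N x i)) q)). intros M.
    eapply Rle_trans. apply (sumN_mono M (max M N)); [lia|intros; apply rpow_ge0].
    rewrite (sumN_zero_tail N); [lra|lia|]. intros i Hi. unfold trunc.
    destruct (Compare_dec.lt_dec i N); [lia|]. rewrite Rabs_R0, rpow_0; auto.
  - intros eps He. exists N. intros n Hn. unfold trunc, R_dist. destruct (Compare_dec.lt_dec n N); [lia|].
    rewrite Rminus_0_r, Rabs_R0. auto.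
Qed.

Definition sgn (x : R) : R := if Rle_dec 0 x then 1 else -1.
Lemma sgn_mul x : sgn x * x = Rabs x.
Proof. unfold sgn. destruct (Rle_dec 0 x). rewrite Rabs_pos_eq; lra. rewrite Rabs_left; lra. Qed.
Lemma sgn_abs x : Rabs (sgn x) = 1.
Proof. unfold sgn. destruct (Rle_dec 0 x). apply Rabs_R1. rewrite Rabs_left; lra. Qed.

Definition qexp (p : ext) : R := ex3 p.

Lemma qexp_range p : p_ge2 p -> 1 <= qexp p <= 2.
Proof.
  destruct p as [p|]; simpl; intros H; [|lra]. unfold qexp, ex3.
  split. apply Rmult_le_reg_r with (p - 1); [lra|]. unfold Rdiv. rewrite Rmult_assoc, Rinv_l; lra.
  apply Rmult_le_reg_r with (p - 1); [lra|]. unfold Rdiv. rewrite Rmult_assoc, Rinv_l; lra.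
Qed.

Definition qnorm (q : R) (N : nat) (b : nat -> R) : R :=
  rpow (sumN N (fun i => rpow (Rabs (b i)) q)) (1 / q).

Lemma qnorm_ge0 q N b : 0 <= qnorm q N b.
Proof. apply rpow_ge0. Qed.

Lemma sumN_rpow_ge0 N b q : 0 <= sumN N (fun i => rpow (Rabs (b i)) q).
Proof. apply sumN_ge0. intros; apply rpow_ge0. Qed.

Lemma holder p (hp : p_ge2 p) N x b : in_ball p x ->
  Rabs (sumN N (fun i => x i * b i)) <= qnorm (qexp p) N b.
Proof.
  intros [_ [_ Hx]].
  eapply Rle_trans; [apply sumN_abs|].
  pose proof (qexp_range p hp) as Hq. set (q := qexp p) in *.
  set (S := sumN N (fun i => rpow (Rabs (b i)) q)).
  assert (HS : 0 <= S) by apply sumN_rpow_ge0.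
  destruct HS as [HS|HS].
  2:{
      assert (forall i, (i < N)%nat -> b i = 0).
      { intros i Hi. pose proof (sumN_eq0 N (fun i => rpow (Rabs (b i)) q) ltac:(intros; apply rpow_ge0) (eq_sym HS) i Hi).
        apply rpow_eq0 in H; [|apply Rabs_pos]. destruct (Req_dec (b i) 0); auto. apply Rabs_no_R0 in H0; lra. }
      rewrite (sumN_ext N _ (fun _ => 0)). rewrite sumN_zero; apply qnorm_ge0.
      intros i Hi. rewrite H; auto. rewrite Rmult_0_r, Rabs_R0; auto. }
  set (B := qnorm q N b).
  assert (HB : 0 < B) by (apply rpow_gt0; exact HS).
  assert (HBq : rpow B q = S) by (unfold B, qnorm; fold S; rewrite rpow_mult by lra; replace (1/q*q) with 1 by (field; lra); apply rpow_1; lra).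
  destruct p as [p|]; simpl in Hx.
  - simpl in hp. assert (q = p / (p - 1)) by auto.
    assert (Y : forall i, Rabs (x i * b i) <= B * (rpow (Rabs (x i)) p / p + rpow (Rabs (b i) / B) q / q)).
    { intros i. rewrite Rabs_mult.
      pose proof (young p q (Rabs (x i)) (Rabs (b i) / B) ltac:(lra) ltac:(rewrite H; field; lra)
         ltac:(apply Rabs_pos) ltac:(apply div_ge0; [apply Rabs_pos|auto])).
      apply Rmult_le_compat_l with (r := B) in H0; [|lra].
      replace (B * (Rabs (x i) * (Rabs (b i) / B))) with (Rabs (x i) * Rabs (b i)) in H0 by (field; lra). auto. }
    eapply Rle_trans; [apply sumN_le; intros i _; apply Y|].
    rewrite sumN_scal, sumN_plus.
    assert (E1 : sumN N (fun i => rpow (Rabs (x i)) p / p) = / p * sumN N (fun i => rpow (Rabs (x i)) p)) by (rewrite <- sumN_scal; apply sumN_ext; intros; unfold Rdiv; ring).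
    assert (IB : rpow (/ B) q = / S).
    { rewrite <- HBq. unfold rpow. destruct Req_EM_T as [e0|e0]; [exfalso; apply Rinv_neq_0_compat in e0; lra|].
      destruct Req_EM_T; [lra|]. rewrite <- Rpower_Ropp. unfold Rpower. rewrite ln_Rinv by lra. f_equal. ring. }
    assert (E2 : sumN N (fun i => rpow (Rabs (b i) / B) q / q) = / q * / S * S).
    { transitivity (/ q * / S * sumN N (fun i => rpow (Rabs (b i)) q)); [|fold S; reflexivity].
      rewrite <- sumN_scal. apply sumN_ext. intros i _. unfold Rdiv.
      rewrite rpow_mul by (try apply Rabs_pos; left; apply Rinv_0_lt_compat; lra). rewrite IB. ring. }
    rewrite E1, E2.
    specialize (Hx N). rewrite rpow_1l in Hx.
    assert (/ p * sumN N (fun i => rpow (Rabs (x i)) p) <= / p).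
    { rewrite <- (Rmult_1_r (/p)) at 2. apply Rmult_le_compat_l; auto. left; apply Rinv_0_lt_compat; lra. }
    assert (/ q * / S * S = / q) by (field; split; lra).
    assert (/ p + / q = 1) by (rewrite H; field; lra).
    nra.
  -
    assert (B = sumN N (fun i => Rabs (b i))).
    { unfold B, qnorm, q, qexp, ex3. replace (1/1) with 1 by field. rewrite rpow_1 by apply sumN_rpow_ge0.
      apply sumN_ext. intros; apply rpow_1, Rabs_pos. }
    rewrite H. apply sumN_le. intros i _. rewrite Rabs_mult.
    specialize (Hx i). pose proof (Rabs_pos (b i)). nra.
Qed.

Lemma rpow_inv' v r : 0 < v -> rpow (/ v) r = / rpow v r.
Proof.
  intros Hv. rewrite !rpow_pos by (try apply Rinv_0_lt_compat; auto).
  rewrite <- Rpower_Ropp. unfold Rpower. rewrite ln_Rinv by lra. f_equal. ring.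
Qed.

Lemma rpow_div u v r : 0 <= u -> 0 < v -> rpow (u / v) r = rpow u r / rpow v r.
Proof. intros. unfold Rdiv. rewrite rpow_mul, rpow_inv'; auto. left; apply Rinv_0_lt_compat; auto. Qed.

Lemma rpow_succ u r : 0 <= u -> u * rpow u (r - 1) = rpow u r.
Proof.
  intros [H|H]. replace r with (1 + (r - 1)) at 2 by ring. rewrite rpow_plus, rpow_1; lra.
  subst. rewrite !rpow_0. ring.
Qed.

Lemma trunc_lt N x i : (i < N)%nat -> trunc N x i = x i.
Proof. intros. unfold trunc. destruct (Compare_dec.lt_dec i N); [auto|lia]. Qed.
Lemma trunc_ge N x i : (N <= i)%nat -> trunc N x i = 0.
Proof. intros. unfold trunc. destruct (Compare_dec.lt_dec i N); [lia|auto]. Qed.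

Lemma sumN_trunc_bound N M f : (forall i, 0 <= f i) -> (forall i, (N <= i)%nat -> f i = 0) -> sumN M f <= sumN N f.
Proof.
  intros H0 H1. eapply Rle_trans. apply (sumN_mono M (max M N)); [lia|auto].
  rewrite (sumN_zero_tail N); [lra|lia|auto].
Qed.

Lemma dual_exists p (hp : p_ge2 p) N b : exists x, in_ball p x /\ (forall i, (N <= i)%nat -> x i = 0) /\
  sumN N (fun i => x i * b i) = qnorm (qexp p) N b.
Proof.
  pose proof (qexp_range p hp) as Hq. set (q := qexp p) in *.
  set (S := sumN N (fun i => rpow (Rabs (b i)) q)).
  assert (HS : 0 <= S) by apply sumN_rpow_ge0.
  destruct HS as [HS|HS].
  2:{ exists (trunc N (fun _ => 0)). split; [split; [apply in_X_trunc|]|split].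
      - split; [lra|]. destruct p as [p|]; simpl.
        + intros M. rewrite rpow_1l. apply Rle_trans with 0; [|lra].
          right. rewrite (sumN_ext M _ (fun _ => 0)), sumN_zero; auto. intros i _. unfold trunc.
          destruct Compare_dec.lt_dec; rewrite Rabs_R0, rpow_0; auto.
        + intros i. unfold trunc. destruct Compare_dec.lt_dec; rewrite Rabs_R0; lra.
      - intros; apply trunc_ge; auto.
      - unfold qnorm. fold q. fold S. rewrite <- HS, rpow_0.
        rewrite (sumN_ext N _ (fun _ => 0)), sumN_zero; auto. intros i Hi. rewrite trunc_lt; auto. ring. }
  set (B := qnorm q N b).
  assert (HB : 0 < B) by (apply rpow_gt0; exact HS).
  assert (HBq : rpow B q = S) by (unfold B, qnorm; fold S; rewrite rpow_mult by lra; replace (1/q*q) with 1 by (field; lra); apply rpow_1; lra).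
  destruct p as [p|].
  - simpl in hp. assert (Hqp : q = p / (p - 1)) by auto.
    set (w := rpow B (q - 1)).
    assert (Hw : 0 < w) by (apply rpow_gt0; auto).
    exists (trunc N (fun i => sgn (b i) * rpow (Rabs (b i)) (q - 1) / w)).
    split; [split; [apply in_X_trunc|]|split].
    + split; [lra|]. simpl. intros M. rewrite rpow_1l.
      eapply Rle_trans; [apply sumN_trunc_bound with (N := N)|].
      * intros; apply rpow_ge0.
      * intros i Hi. rewrite trunc_ge, Rabs_R0, rpow_0; auto.
      * right. rewrite (sumN_ext N _ (fun i => / S * rpow (Rabs (b i)) q)).
        rewrite sumN_scal. fold S. field. lra.
        intros i Hi. rewrite trunc_lt by auto. unfold Rdiv. rewrite !Rabs_mult, sgn_abs, Rmult_1_l.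
        rewrite (Rabs_pos_eq (rpow _ _)) by apply rpow_ge0.
        rewrite (Rabs_pos_eq (/ w)) by (left; apply Rinv_0_lt_compat; auto).
        rewrite rpow_mul by (try apply rpow_ge0; left; apply Rinv_0_lt_compat; auto).
        rewrite rpow_inv' by auto. unfold w.
        rewrite !rpow_mult by (try apply Rabs_pos; lra).
        replace ((q - 1) * p) with q by (rewrite Hqp; field; lra). rewrite HBq. ring.
    + intros; apply trunc_ge; auto.
    + rewrite (sumN_ext N _ (fun i => / w * rpow (Rabs (b i)) q)).
      rewrite sumN_scal. fold S. rewrite <- HBq.
      rewrite <- (rpow_succ B q) by lra. fold w. fold B. field. lra.
      intros i Hi. rewrite trunc_lt by auto. rewrite <- (rpow_succ (Rabs (b i)) q) by apply Rabs_pos.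
      rewrite <- (sgn_mul (b i)). field. lra.
  -
    exists (trunc N (fun i => sgn (b i))).
    split; [split; [apply in_X_trunc|]|split].
    + split; [lra|]. simpl. intros i. unfold trunc. destruct Compare_dec.lt_dec. rewrite sgn_abs; lra. rewrite Rabs_R0; lra.
    + intros; apply trunc_ge; auto.
    + unfold B, qnorm, q, qexp; simpl ex3. replace (1/1) with 1 by field. rewrite rpow_1 by apply sumN_rpow_ge0.
      apply sumN_ext. intros i Hi. rewrite trunc_lt, sgn_mul by auto. rewrite rpow_1; auto. apply Rabs_pos.
Qed.

Lemma Eavg_ext n F G : (forall e, F e = G e) -> Eavg n F = Eavg n G.
Proof. intros H. f_equal. apply functional_extensionality; auto. Qed.

Lemma Eavg_plus n F G : Eavg n (fun e => F e + G e) = Eavg n F + Eavg n G.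
Proof. revert F G; induction n; intros F G; simpl; auto. rewrite !IHn. field. Qed.

Lemma Eavg_scal n c F : Eavg n (fun e => c * F e) = c * Eavg n F.
Proof. revert F; induction n; intros F; simpl; auto. rewrite !IHn. field. Qed.

Lemma Eavg_const n c : Eavg n (fun _ => c) = c.
Proof. induction n; simpl; auto. rewrite IHn. field. Qed.

Lemma Eavg_le n F G : (forall e, F e <= G e) -> Eavg n F <= Eavg n G.
Proof. revert F G; induction n; intros F G H; simpl; auto. pose proof (IHn _ _ (fun e => H (cns 1 e))). pose proof (IHn _ _ (fun e => H (cns (-1) e))). lra. Qed.

Lemma Eavg_ge0 n F : (forall e, 0 <= F e) -> 0 <= Eavg n F.
Proof. intros H. rewrite <- (Eavg_const n 0). apply Eavg_le; auto. Qed.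

Lemma Eavg_sign n : forall F s, (forall k, s k = 1 \/ s k = -1) ->
  Eavg n (fun e => F (fun k => s k * e k)) = Eavg n F.
Proof.
  induction n; intros F s Hs; simpl.
  - f_equal. apply functional_extensionality; intros; ring.
  - assert (E : forall c e, (fun k => s k * cns c e k) = cns (s O * c) (fun k => s (S k) * e k)).
    { intros c e. apply functional_extensionality. intros [|k]; reflexivity. }
    rewrite (Eavg_ext n (fun e => F (fun k => s k * cns 1 e k)) (fun e => (fun e' => F (cns (s O * 1) e')) (fun k => s (S k) * e k))) by (intros; rewrite E; auto).
    rewrite (Eavg_ext n (fun e => F (fun k => s k * cns (-1) e k)) (fun e => (fun e' => F (cns (s O * -1) e')) (fun k => s (S k) * e k))) by (intros; rewrite E; auto).
    rewrite (IHn (fun e' => F (cns (s O * 1) e')) (fun k => s (S k))) by auto.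
    rewrite (IHn (fun e' => F (cns (s O * -1) e')) (fun k => s (S k))) by auto.
    destruct (Hs O) as [h|h]; rewrite h.
    + replace (1 * 1) with 1 by ring. replace (1 * -1) with (-1) by ring. auto.
    + replace (-1 * 1) with (-1) by ring. replace (-1 * -1) with 1 by ring. field.
Qed.

Definition Ssum (n : nat) (a : nat -> R) (e : nat -> R) : R := sumN n (fun k => a (S k) * e k).
Definition sumsq (n : nat) (a : nat -> R) : R := sumN n (fun k => a (S k) ^ 2).
Definition shift (a : nat -> R) : nat -> R := fun k => a (S k).

Lemma Ssum_cns n a c e : Ssum (S n) a (cns c e) = a 1%nat * c + Ssum n (shift a) e.
Proof. unfold Ssum. rewrite sumN_first. reflexivity. Qed.

Lemma sumsq_S n a : sumsq (S n) a = a 1%nat ^ 2 + sumsq n (shift a).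
Proof. unfold sumsq. rewrite sumN_first. reflexivity. Qed.

Lemma sumsq_ge0 n a : 0 <= sumsq n a.
Proof. apply sumN_ge0. intros; apply pow2_ge_0. Qed.

Lemma dep_Ssum n a G : dep n (fun e => G (Ssum n a e)).
Proof. intros e e' H. unfold Ssum. f_equal. apply sumN_ext. intros i Hi. rewrite H; auto. Qed.

Lemma moment2 n : forall a, Eavg n (fun e => Ssum n a e ^ 2) = sumsq n a.
Proof.
  induction n; intros a; [unfold Ssum, sumsq; simpl; ring|cbn [Eavg]].
  rewrite (Eavg_ext n (fun e => Ssum (S n) a (cns 1 e) ^ 2) (fun e => (a 1%nat + Ssum n (shift a) e) ^ 2)) by (intros; rewrite Ssum_cns; f_equal; ring).
  rewrite (Eavg_ext n (fun e => Ssum (S n) a (cns (-1) e) ^ 2) (fun e => (- a 1%nat + Ssum n (shift a) e) ^ 2)) by (intros; rewrite Ssum_cns; f_equal; ring).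
  rewrite <- Eavg_plus.
  rewrite (Eavg_ext n _ (fun e => 2 * (a 1%nat ^ 2) + 2 * Ssum n (shift a) e ^ 2)) by (intros; ring).
  rewrite Eavg_plus, Eavg_const, Eavg_scal, IHn, sumsq_S. field.
Qed.

Lemma moment4 n : forall a, Eavg n (fun e => Ssum n a e ^ 4) <= 3 * sumsq n a ^ 2.
Proof.
  induction n; intros a; [unfold Ssum, sumsq; simpl; lra|cbn [Eavg]].
  rewrite (Eavg_ext n (fun e => Ssum (S n) a (cns 1 e) ^ 4) (fun e => (a 1%nat + Ssum n (shift a) e) ^ 4)) by (intros; rewrite Ssum_cns; f_equal; ring).
  rewrite (Eavg_ext n (fun e => Ssum (S n) a (cns (-1) e) ^ 4) (fun e => (- a 1%nat + Ssum n (shift a) e) ^ 4)) by (intros; rewrite Ssum_cns; f_equal; ring).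
  rewrite <- Eavg_plus.
  rewrite (Eavg_ext n _ (fun e => 2 * (a 1%nat ^ 4) + (12 * a 1%nat ^ 2 * Ssum n (shift a) e ^ 2 + 2 * Ssum n (shift a) e ^ 4))) by (intros; ring).
  rewrite !Eavg_plus, Eavg_const, !Eavg_scal, moment2, sumsq_S.
  pose proof (IHn (shift a)). pose proof (sumsq_ge0 n (shift a)). pose proof (pow2_ge_0 (a 1%nat)).
  nra.
Qed.

Lemma abs_lower x c : 0 < c -> x ^ 2 * (3 * c ^ 2 - x ^ 2) / (2 * c ^ 3) <= Rabs x.
Proof.
  intros Hc. set (u := Rabs x). assert (Hu : 0 <= u) by apply Rabs_pos.
  assert (x ^ 2 = u ^ 2) by (unfold u; rewrite <- (pow2_abs x); auto).
  rewrite H. apply Rmult_le_reg_r with (2 * c ^ 3). apply Rmult_lt_0_compat; [lra|apply pow_lt; auto].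
  unfold Rdiv. rewrite Rmult_assoc, Rinv_l by (apply Rgt_not_eq, Rmult_lt_0_compat; [lra|apply pow_lt; auto]). rewrite Rmult_1_r.
  assert (0 <= u * (u - c) ^ 2 * (u + 2 * c)) by (apply Rmult_le_pos; [apply Rmult_le_pos; [lra|apply pow2_ge_0]|lra]).
  nra.
Qed.

Lemma E_abs_lower n a : sqrt (sumsq n a) / sqrt 3 <= Eavg n (fun e => Rabs (Ssum n a e)).
Proof.
  set (s := sumsq n a). assert (Hs : 0 <= s) by apply sumsq_ge0.
  destruct Hs as [Hs|Hs].
  - set (c := sqrt 3 * sqrt s).
    assert (Hc : 0 < c) by (unfold c; apply Rmult_lt_0_compat; apply sqrt_lt_R0; lra).
    eapply Rle_trans; [|apply Eavg_le; intros e; apply (abs_lower _ c Hc)].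
    rewrite (Eavg_ext n _ (fun e => (3 * c ^ 2 / (2 * c ^ 3)) * Ssum n a e ^ 2 + (- / (2 * c ^ 3)) * Ssum n a e ^ 4)) by (intros; field; lra).
    rewrite Eavg_plus, !Eavg_scal, moment2. fold s.
    pose proof (moment4 n a). fold s in H.
    assert (c ^ 2 = 3 * s) by (unfold c; rewrite Rpow_mult_distr; simpl; rewrite !Rmult_1_r, !sqrt_sqrt; lra).
    assert (Hc3 : 0 < 2 * c ^ 3) by (apply Rmult_lt_0_compat; [lra|apply pow_lt; auto]).
    assert (- / (2 * c ^ 3) * Eavg n (fun e => Ssum n a e ^ 4) >= - / (2 * c ^ 3) * (3 * s ^ 2)).
    { apply Rle_ge. apply Rmult_le_compat_neg_l; [|auto]. left. apply Ropp_lt_gt_0_contravar. apply Rinv_0_lt_compat; auto. }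
    assert (E : 3 * c ^ 2 / (2 * c ^ 3) * s + - / (2 * c ^ 3) * (3 * s ^ 2) = sqrt s / sqrt 3).
    { replace (c ^ 3) with (c ^ 2 * c) by ring. rewrite H0. unfold c.
      assert (0 < sqrt 3) by (apply sqrt_lt_R0; lra). assert (0 < sqrt s) by (apply sqrt_lt_R0; lra).
      assert (sqrt s * sqrt s = s) by (apply sqrt_sqrt; lra).
      transitivity (s / (sqrt 3 * sqrt s)). field. split; lra.
      rewrite <- H4 at 1. field. split; lra. }
    lra.
  - rewrite <- Hs, sqrt_0. unfold Rdiv; rewrite Rmult_0_l. apply Eavg_ge0. intros; apply Rabs_pos.
Qed.

Lemma jensen n F r : 1 <= r -> (forall e, 0 <= F e) ->
  rpow (Eavg n F) r <= Eavg n (fun e => rpow (F e) r).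
Proof.
  intros Hr HF. set (c := Eavg n F). assert (Hc : 0 <= c) by (apply Eavg_ge0; auto).
  destruct Hc as [Hc|Hc].
  - eapply Rle_trans; [|apply Eavg_le; intros e; apply (tangent r c (F e) Hr Hc (HF e))].
    rewrite Eavg_plus, Eavg_const.
    rewrite (Eavg_ext n _ (fun e => (r * rpow c (r - 1)) * F e + (- (r * rpow c (r - 1) * c)))) by (intros; ring).
    rewrite Eavg_plus, Eavg_scal, Eavg_const. fold c. lra.
  - rewrite <- Hc, rpow_0. apply Eavg_ge0. intros; apply rpow_ge0.
Qed.

Lemma khin_sqrt3 n a q : 1 <= q ->
  sqrt (sumsq n a) <= sqrt 3 * rpow (Eavg n (fun e => rpow (Rabs (Ssum n a e)) q)) (1 / q).
Proof.
  intros Hq.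
  pose proof (E_abs_lower n a).
  assert (J : Eavg n (fun e => Rabs (Ssum n a e)) <= rpow (Eavg n (fun e => rpow (Rabs (Ssum n a e)) q)) (1 / q)).
  { pose proof (jensen n (fun e => Rabs (Ssum n a e)) q Hq ltac:(intros; apply Rabs_pos)).
    assert (Hd : 0 <= 1 / q) by (apply div_ge0; lra).
    pose proof (rpow_le _ _ (1/q) (conj (rpow_ge0 _ _) H0) Hd) as H1.
    assert (G : 0 <= Eavg n (fun e => Rabs (Ssum n a e))) by (apply Eavg_ge0; intros; apply Rabs_pos).
    rewrite rpow_mult in H1 by auto.
    replace (q * (1 / q)) with 1 in H1 by (field; lra). rewrite rpow_1 in H1 by auto.
    auto. }
  assert (0 < sqrt 3) by (apply sqrt_lt_R0; lra).
  assert (sqrt (sumsq n a) <= sqrt 3 * Eavg n (fun e => Rabs (Ssum n a e))).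
  { apply Rmult_le_compat_l with (r := sqrt 3) in H; [|lra].
    replace (sqrt 3 * (sqrt (sumsq n a) / sqrt 3)) with (sqrt (sumsq n a)) in H by (field; lra). auto. }
  nra.
Qed.

Definition Rnorm (q : R) (n : nat) (a : nat -> R) : R :=
  rpow (Eavg n (fun e => rpow (Rabs (Ssum n a e)) q)) (1 / q).

Definition KD (q A : R) : Prop := forall n a, sqrt (sumsq n a) <= A * Rnorm q n a.

Lemma sumsq_abs n a : sumN n (fun k => Rabs (a (S k)) ^ 2) = sumsq n a.
Proof. unfold sumsq. apply sumN_ext. intros. apply pow2_abs. Qed.

Lemma khin_iff q A : khintchine_ineq q A <-> KD q A.
Proof.
  split.
  - intros K n a. specialize (K n a (rad_integrable n (fun e => rpow (Rabs (Ssum n a e)) q) (dep_Ssum n a (fun s => rpow (Rabs s) q)))).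
    rewrite sumsq_abs in K.
    rewrite (rad_RiemannInt n (fun e => rpow (Rabs (Ssum n a e)) q) (dep_Ssum n a (fun s => rpow (Rabs s) q))) in K. exact K.
  - intros K n a pr. rewrite sumsq_abs.
    replace (RiemannInt pr) with (Eavg n (fun e => rpow (Rabs (Ssum n a e)) q)).
    apply K. symmetry. apply (rad_RiemannInt n (fun e => rpow (Rabs (Ssum n a e)) q) (dep_Ssum n a (fun s => rpow (Rabs s) q)) pr).
Qed.

Lemma Rnorm_ge0 q n a : 0 <= Rnorm q n a.
Proof. apply rpow_ge0. Qed.

Lemma KD_exists q : 1 <= q -> exists A, 1 <= A /\ is_optimal (KD q) A.
Proof.
  intros Hq.
  set (V := fun v => exists n a, 0 < Rnorm q n a /\ v = sqrt (sumsq n a) / Rnorm q n a).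
  assert (B : bound V).
  { exists (sqrt 3). intros v [n [a [H E]]]. subst v. pose proof (khin_sqrt3 n a q Hq).
    fold (Rnorm q n a) in H0. apply Rmult_le_reg_r with (Rnorm q n a); auto.
    unfold Rdiv. rewrite Rmult_assoc, Rinv_l, Rmult_1_r by lra. auto. }
  set (a1 := fun _ : nat => 1).
  assert (S1 : sumsq 1 a1 = 1) by (unfold sumsq, a1; simpl; ring).
  assert (R1 : Rnorm q 1 a1 = 1).
  { unfold Rnorm. simpl. unfold Ssum, a1. simpl.
    replace (0 + 1 * 1) with 1 by ring.
    replace (0 + 1 * -1) with (-1) by ring.
    rewrite Rabs_R1, Rabs_m1, rpow_1l. replace ((1+1)/2) with 1 by field. apply rpow_1l. }
  assert (N : exists v, V v).
  { exists 1. exists 1%nat, a1. rewrite R1, S1, sqrt_1. split; [lra|field]. }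
  destruct (completeness V B N) as [A [HA1 HA2]].
  assert (A1 : 1 <= A) by (apply HA1; exists 1%nat, a1; rewrite R1, S1, sqrt_1; split; [lra|field]).
  exists A. split; [auto|split].
  - intros n a. destruct (Rnorm_ge0 q n a) as [H|H].
    + assert (sqrt (sumsq n a) / Rnorm q n a <= A) by (apply HA1; exists n, a; auto).
      apply Rmult_le_compat_r with (r := Rnorm q n a) in H0; [|lra].
      unfold Rdiv in H0. rewrite Rmult_assoc, Rinv_l, Rmult_1_r in H0 by lra. auto.
    + pose proof (khin_sqrt3 n a q Hq). fold (Rnorm q n a) in H0. rewrite <- H in *. lra.
  - intros A' K. apply HA2. intros v [n [a [H E]]]. subst v. specialize (K n a).
    apply Rmult_le_reg_r with (Rnorm q n a); auto.
    unfold Rdiv. rewrite Rmult_assoc, Rinv_l, Rmult_1_r by lra. auto.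
Qed.

Lemma trunc_S K x : trunc (S K) x = sadd (trunc K x) (sscal (x K) (e K)).
Proof.
  apply functional_extensionality. intros i. unfold sadd, sscal, e, trunc.
  destruct (Compare_dec.lt_dec i (S K)), (Compare_dec.lt_dec i K), (Nat.eq_dec i K); subst; try lia; ring.
Qed.

Lemma trunc_0 x : trunc 0 x = (fun _ => 0).
Proof. apply functional_extensionality. intros i. unfold trunc. destruct Compare_dec.lt_dec; [lia|auto]. Qed.

Lemma e_trunc K : e K = trunc (S K) (e K).
Proof. apply functional_extensionality. intros i. unfold trunc, e. destruct Compare_dec.lt_dec, Nat.eq_dec; auto; lia. Qed.

Lemma in_X_e p K : in_X p (e K).
Proof. rewrite e_trunc. apply in_X_trunc. Qed.

Lemma in_X_zero p : in_X p (fun _ => 0).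
Proof. rewrite <- (trunc_0 (fun _ => 0)). apply in_X_trunc. Qed.

Lemma trunc_id N x : (forall i, (N <= i)%nat -> x i = 0) -> trunc N x = x.
Proof. intros H. apply functional_extensionality. intros i. unfold trunc. destruct Compare_dec.lt_dec; auto. rewrite H; auto; lia. Qed.

Lemma zero_fix : sadd (fun _ : nat => 0) (sscal 1 (fun _ => 0)) = (fun _ => 0).
Proof. apply functional_extensionality. intros; unfold sadd, sscal; ring. Qed.

Section Bil.
Variable p : ext.
Variable T : seqR -> seqR -> R.
Hypothesis HT : bilinear p T.

Lemma T_zero_l y : in_X Inf y -> T (fun _ => 0) y = 0.
Proof.
  intros Hy. destruct HT as [H1 _]. pose proof (H1 (fun _ => 0) (fun _ => 0) y 1 (in_X_zero p) (in_X_zero p) Hy).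
  rewrite zero_fix in H. lra.
Qed.

Lemma T_zero_r x : in_X p x -> T x (fun _ => 0) = 0.
Proof.
  intros Hx. destruct HT as [_ H2]. pose proof (H2 x (fun _ => 0) (fun _ => 0) 1 Hx (in_X_zero Inf) (in_X_zero Inf)).
  rewrite zero_fix in H. lra.
Qed.

Lemma T_expand_l N x y : in_X Inf y -> T (trunc N x) y = sumN N (fun i => x i * T (e i) y).
Proof.
  intros Hy. induction N; simpl.
  - rewrite trunc_0. apply T_zero_l; auto.
  - rewrite trunc_S. destruct HT as [H1 _]. rewrite H1; auto using in_X_trunc, in_X_e. rewrite IHN. auto.
Qed.

Lemma T_expand_r M x y : in_X p x -> T x (trunc M y) = sumN M (fun j => y j * T x (e j)).
Proof.
  intros Hx. induction M; simpl.
  - rewrite trunc_0. apply T_zero_r; auto.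
  - rewrite trunc_S. destruct HT as [_ H2]. rewrite H2; auto using in_X_trunc, in_X_e. rewrite IHM. auto.
Qed.

Lemma T_expand N M x y : T (trunc N x) (trunc M y) = sumN N (fun i => x i * sumN M (fun j => y j * T (e i) (e j))).
Proof.
  rewrite T_expand_l by apply in_X_trunc. apply sumN_ext. intros i _. rewrite T_expand_r by apply in_X_e. auto.
Qed.
End Bil.

Lemma bil_norm_bound p T m x y : bil_norm p T m -> in_ball p x -> in_ball Inf y -> Rabs (T x y) <= m.
Proof. intros [H _] Hx Hy. apply H. exists x, y. auto. Qed.

Lemma bil_norm_ge0 p T m : bil_norm p T m -> 0 <= m.
Proof.
  intros Hm. eapply Rle_trans; [apply Rabs_pos|]. apply (bil_norm_bound p T m (fun _ => 0) (fun _ => 0) Hm).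
  - split; [apply in_X_zero|]. split; [lra|]. destruct p; simpl; intros; [|rewrite Rabs_R0; lra].
    rewrite rpow_1l, (sumN_ext N _ (fun _ => 0)), sumN_zero; [lra|]. intros. rewrite Rabs_R0, rpow_0; auto.
  - split; [apply in_X_zero|]. split; [lra|]. simpl; intros; rewrite Rabs_R0; lra.
Qed.

Lemma Eavg_le_box n F G : (forall e, (forall k, Rabs (e k) <= 1) -> F e <= G e) -> Eavg n F <= Eavg n G.
Proof.
  revert F G; induction n; intros F G H; simpl.
  - apply H. intros; rewrite Rabs_R0; lra.
  - assert (forall c e, Rabs c <= 1 -> (forall k, Rabs (e k) <= 1) -> forall k, Rabs (cns c e k) <= 1).
    { intros c e0 Hc He [|k]; simpl; auto. }
    pose proof (IHn (fun e => F (cns 1 e)) (fun e => G (cns 1 e)) ltac:(intros; apply H; apply H0; auto; rewrite Rabs_R1; lra)).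
    pose proof (IHn (fun e => F (cns (-1) e)) (fun e => G (cns (-1) e)) ltac:(intros; apply H; apply H0; auto; rewrite Rabs_m1; lra)).
    lra.
Qed.

Lemma Eavg_sumN n N F : Eavg n (fun e => sumN N (fun i => F i e)) = sumN N (fun i => Eavg n (F i)).
Proof. induction N; simpl. apply Eavg_const. rewrite Eavg_plus, IHN. auto. Qed.

Lemma ex1_q p : p_ge2 p -> ex1 p = qexp p / 2.
Proof. destruct p; simpl; intros; unfold qexp, ex3; [field; lra|field]. Qed.
Lemma ex2_q p : p_ge2 p -> ex2 p = 1 / qexp p.
Proof. destruct p; simpl; intros; unfold qexp, ex3; [field; lra|field]. Qed.
Lemma ex4_q p : p_ge2 p -> ex4 p = 2 / qexp p.
Proof. destruct p; simpl; intros; unfold qexp, ex3; [field; lra|field]. Qed.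

Definition rowa (T : seqR -> seqR -> R) (i : nat) : nat -> R :=
  fun k => match k with O => 0 | S j => T (e i) (e j) end.

Lemma Ssum_rowa T i M ep : Ssum M (rowa T i) ep = sumN M (fun j => ep j * T (e i) (e j)).
Proof. unfold Ssum, rowa. apply sumN_ext. intros; ring. Qed.

Lemma sumsq_rowa T i M : sumsq M (rowa T i) = sumN M (fun j => Rabs (T (e i) (e j)) ^ 2).
Proof. unfold sumsq, rowa. apply sumN_ext. intros. rewrite pow2_abs. auto. Qed.

Lemma rpow_mono x y r : x <= y -> 0 <= x -> 0 <= r -> rpow x r <= rpow y r.
Proof. intros; apply rpow_le; auto. Qed.

Lemma rpow_le_pow_inv x y q : 0 <= x -> 0 <= y -> 0 < q -> rpow x (1 / q) <= y -> x <= rpow y q.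
Proof.
  intros Hx Hy Hq H. apply (rpow_mono _ _ q) in H; [|apply rpow_ge0|lra].
  rewrite rpow_mult in H by auto. replace (1 / q * q) with 1 in H by (field; lra). rewrite rpow_1 in H; auto.
Qed.

Lemma C_core p (hp : p_ge2 p) A (HA : 0 <= A) (K : KD (qexp p) A) T m :
  bilinear p T -> bil_norm p T m -> forall N M,
  sumN N (fun i => rpow (sumN M (fun j => Rabs (T (e i) (e j)) ^ 2)) (qexp p / 2)) <= rpow (A * m) (qexp p).
Proof.
  intros HT Hm N M.
  pose proof (qexp_range p hp) as Hq. set (q := qexp p) in *.
  pose proof (bil_norm_ge0 p T m Hm) as Hm0.
  assert (C1 : forall ep, (forall k, Rabs (ep k) <= 1) ->
    sumN N (fun i => rpow (Rabs (Ssum M (rowa T i) ep)) q) <= rpow m q).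
  { intros ep Hep. set (b := fun i => Ssum M (rowa T i) ep).
    destruct (dual_exists p hp N b) as [x [Hx [Hxs Hxb]]].
    assert (Hy : in_ball Inf (trunc M ep)).
    { split; [apply in_X_trunc|]. split; [lra|]. simpl. intros i. unfold trunc. destruct Compare_dec.lt_dec; auto. rewrite Rabs_R0; lra. }
    pose proof (bil_norm_bound p T m x (trunc M ep) Hm Hx Hy).
    rewrite <- (trunc_id N x Hxs) in H. rewrite (T_expand p T HT) in H.
    rewrite (sumN_ext N _ (fun i => x i * b i)) in H by (intros; unfold b; rewrite Ssum_rowa; auto).
    rewrite Hxb in H. rewrite Rabs_pos_eq in H by apply qnorm_ge0.
    apply rpow_le_pow_inv; auto. apply sumN_rpow_ge0. lra. }
  assert (C2 : sumN N (fun i => Eavg M (fun ep => rpow (Rabs (Ssum M (rowa T i) ep)) q)) <= rpow m q).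
  { rewrite <- Eavg_sumN. rewrite <- (Eavg_const M (rpow m q)). apply Eavg_le_box. auto. }
  assert (C3 : forall i, rpow (sumN M (fun j => Rabs (T (e i) (e j)) ^ 2)) (q / 2) <=
                rpow A q * Eavg M (fun ep => rpow (Rabs (Ssum M (rowa T i) ep)) q)).
  { intros i. pose proof (K M (rowa T i)) as Ki. rewrite sumsq_rowa in Ki.
    apply (rpow_mono _ _ q) in Ki; [|apply sqrt_pos|lra].
    rewrite <- rpow_half in Ki by (apply sumN_ge0; intros; apply pow2_ge_0).
    rewrite rpow_mult in Ki by (apply sumN_ge0; intros; apply pow2_ge_0).
    replace (1 / 2 * q) with (q / 2) in Ki by field.
    rewrite rpow_mul in Ki by (auto; apply Rnorm_ge0).
    unfold Rnorm in Ki. rewrite rpow_mult in Ki by (apply Eavg_ge0; intros; apply rpow_ge0).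
    replace (1 / q * q) with 1 in Ki by (field; lra).
    rewrite rpow_1 in Ki by (apply Eavg_ge0; intros; apply rpow_ge0). auto. }
  eapply Rle_trans; [apply sumN_le; intros i _; apply C3|].
  rewrite sumN_scal. rewrite rpow_mul by auto.
  apply Rmult_le_compat_l; auto. apply rpow_ge0.
Qed.

Lemma C_upper p (hp : p_ge2 p) A (HA : 0 <= A) (K : KD (qexp p) A) : C_ineq p A.
Proof.
  intros T m HT _ Hm N M.
  pose proof (qexp_range p hp) as Hq.
  rewrite ex1_q, ex2_q by auto.
  pose proof (C_core p hp A HA K T m HT Hm N M).
  pose proof (bil_norm_ge0 p T m Hm).
  apply (rpow_mono _ _ (1 / qexp p)) in H; [|apply sumN_ge0; intros; apply rpow_ge0|apply div_ge0; lra].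
  rewrite rpow_mult in H by (apply Rmult_le_pos; auto). replace (qexp p * (1 / qexp p)) with 1 in H by (field; lra).
  rewrite rpow_1 in H by (apply Rmult_le_pos; auto). auto.
Qed.

Definition NrP (r : R) (M : nat) (v : nat -> R) : R := rpow (sumN M (fun j => rpow (v j) r)) (1 / r).

Lemma NrP_pow r M v : 0 < r -> rpow (NrP r M v) r = sumN M (fun j => rpow (v j) r).
Proof.
  intros Hr. unfold NrP. rewrite rpow_mult by (apply sumN_ge0; intros; apply rpow_ge0).
  replace (1 / r * r) with 1 by (field; lra). apply rpow_1. apply sumN_ge0; intros; apply rpow_ge0.
Qed.

Lemma NrP_zero r M v : 0 < r -> (forall j, 0 <= v j) -> NrP r M v = 0 -> forall j, (j < M)%nat -> v j = 0.
Proof.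
  intros Hr Hv H j Hj. pose proof (NrP_pow r M v Hr). rewrite H, rpow_0 in H0.
  pose proof (sumN_eq0 M (fun j => rpow (v j) r) ltac:(intros; apply rpow_ge0) (eq_sym H0) j Hj).
  apply rpow_eq0 in H1; auto.
Qed.

Lemma mink2 r M v w : 1 <= r -> (forall j, 0 <= v j) -> (forall j, 0 <= w j) ->
  NrP r M (fun j => v j + w j) <= NrP r M v + NrP r M w.
Proof.
  intros Hr Hv Hw.
  set (a := NrP r M v). set (b := NrP r M w).
  assert (Ha : 0 <= a) by apply rpow_ge0. assert (Hb : 0 <= b) by apply rpow_ge0.
  destruct Ha as [Ha|Ha].
  2:{ pose proof (NrP_zero r M v ltac:(lra) Hv (eq_sym Ha)).
      assert (E : NrP r M (fun j => v j + w j) = b).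
      { unfold b, NrP. f_equal. apply sumN_ext. intros j Hj. rewrite H; auto. rewrite Rplus_0_l; auto. }
      rewrite E. lra. }
  destruct Hb as [Hb|Hb].
  2:{ pose proof (NrP_zero r M w ltac:(lra) Hw (eq_sym Hb)).
      assert (E : NrP r M (fun j => v j + w j) = a).
      { unfold a, NrP. f_equal. apply sumN_ext. intros j Hj. rewrite H; auto. rewrite Rplus_0_r; auto. }
      rewrite E. lra. }
  set (l := a / (a + b)).
  assert (Hl : 0 <= l <= 1).
  { unfold l. split. apply div_ge0; lra. apply Rmult_le_reg_r with (a + b); [lra|].
    unfold Rdiv. rewrite Rmult_assoc, Rinv_l by lra. lra. }
  assert (Hab : 0 < a + b) by lra.
  assert (Key : sumN M (fun j => rpow (v j + w j) r) <= rpow (a + b) r).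
  { assert (E : forall j, rpow (v j + w j) r <= rpow (a + b) r * (l * (rpow (v j) r / rpow a r) + (1 - l) * (rpow (w j) r / rpow b r))).
    { intros j.
      replace (v j + w j) with ((a + b) * (l * (v j / a) + (1 - l) * (w j / b))) by (unfold l; field; lra).
      rewrite rpow_mul by (try lra; apply Rplus_le_le_0_compat; apply Rmult_le_pos; try lra; apply div_ge0; auto).
      apply Rmult_le_compat_l; [apply rpow_ge0|].
      rewrite <- !rpow_div by auto. apply rpow_convex; auto; apply div_ge0; auto. }
    eapply Rle_trans; [apply sumN_le; intros j _; apply E|].
    rewrite sumN_scal. 
    rewrite sumN_plus, (sumN_ext M (fun j => l * (rpow (v j) r / rpow a r)) (fun j => (l / rpow a r) * rpow (v j) r)) by (intros; field; apply Rgt_not_eq, rpow_gt0; auto).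
    rewrite (sumN_ext M (fun j => (1 - l) * (rpow (w j) r / rpow b r)) (fun j => ((1 - l) / rpow b r) * rpow (w j) r)) by (intros; field; apply Rgt_not_eq, rpow_gt0; auto).
    rewrite !sumN_scal. rewrite <- (NrP_pow r M v), <- (NrP_pow r M w) by lra. fold a b.
    replace (l / rpow a r * rpow a r + (1 - l) / rpow b r * rpow b r) with 1. lra.
    field. split; apply Rgt_not_eq, rpow_gt0; auto. }
  unfold NrP at 1. apply (rpow_mono _ _ (1 / r)) in Key; [|apply sumN_ge0; intros; apply rpow_ge0|apply div_ge0; lra].
  rewrite rpow_mult in Key by lra. replace (r * (1 / r)) with 1 in Key by (field; lra). rewrite rpow_1 in Key by lra. auto.
Qed.

Lemma minkN r M N u : 1 <= r -> (forall i j, 0 <= u i j) ->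
  NrP r M (fun j => sumN N (fun i => u i j)) <= sumN N (fun i => NrP r M (u i)).
Proof.
  intros Hr Hu. induction N; simpl.
  - unfold NrP. rewrite (sumN_ext M _ (fun _ => 0)), sumN_zero, rpow_0; [lra|]. intros; apply rpow_0.
  - eapply Rle_trans. apply mink2; auto. intros; apply sumN_ge0; auto. lra.
Qed.

Lemma D_upper p (hp : p_ge2 p) A (HA : 0 <= A) (K : KD (qexp p) A) : D_ineq p A.
Proof.
  intros T m HT _ Hm N M.
  pose proof (qexp_range p hp) as Hq.
  pose proof (C_core p hp A HA K T m HT Hm N M) as C.
  pose proof (bil_norm_ge0 p T m Hm).
  rewrite ex4_q by auto. change (ex3 p) with (qexp p). set (q := qexp p) in *.
  set (r := 2 / q).
  assert (Hr : 1 <= r) by (unfold r; apply Rmult_le_reg_r with q; [lra|]; unfold Rdiv; rewrite Rmult_assoc, Rinv_l; lra).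
  set (u := fun i j => rpow (Rabs (T (e i) (e j))) q).
  pose proof (minkN r M N u Hr ltac:(intros; apply rpow_ge0)) as Mk.
  rewrite (sumN_ext N _ (fun i => rpow (sumN M (fun j => Rabs (T (e i) (e j)) ^ 2)) (q / 2))) in Mk.
  2:{ intros i _. unfold NrP, u. replace (1 / r) with (q / 2) by (unfold r; field; lra). f_equal.
      apply sumN_ext. intros j _. rewrite rpow_mult by apply Rabs_pos. replace (q * r) with 2 by (unfold r; field; lra).
      apply rpow_2, Rabs_pos. }
  assert (Hx : 0 <= sumN M (fun j => rpow (sumN N (fun i => u i j)) r)) by (apply sumN_ge0; intros; apply rpow_ge0).
  replace (rpow (sumN M (fun j => rpow (sumN N (fun i => rpow (Rabs (T (e i) (e j))) q)) r)) (1 / 2))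
    with (rpow (NrP r M (fun j => sumN N (fun i => u i j))) (1 / q)).
  2:{ unfold NrP. rewrite rpow_mult by auto. f_equal. unfold r; field; lra. }
  apply (rpow_mono _ _ (1 / q)) in Mk; [|apply rpow_ge0|apply div_ge0; lra].
  eapply Rle_trans; [exact Mk|].
  apply (rpow_mono _ _ (1 / q)) in C; [|apply sumN_ge0; intros; apply rpow_ge0|apply div_ge0; lra].
  rewrite rpow_mult in C by (apply Rmult_le_pos; auto). replace (q * (1 / q)) with 1 in C by (field; lra).
  rewrite rpow_1 in C by (apply Rmult_le_pos; auto). auto.
Qed.

Fixpoint pat (i : nat) (k : nat) : R :=
  match k with
  | O => if Nat.even i then 1 else -1
  | S k => pat (Nat.div2 i) k
  end.

Lemma pat_even i : pat (2 * i) = cns 1 (pat i).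
Proof. apply functional_extensionality. intros [|k]; cbn [pat cns]. rewrite Nat.even_even; auto. rewrite Nat.div2_double; auto. Qed.

Lemma pat_odd i : pat (2 * i + 1) = cns (-1) (pat i).
Proof. apply functional_extensionality. intros [|k]; cbn [pat cns]. rewrite Nat.even_odd; auto. rewrite Nat.div2_odd'; auto. Qed.

Lemma pat_sign i k : pat i k = 1 \/ pat i k = -1.
Proof. revert i; induction k; intros i; simpl. destruct (Nat.even i); auto. apply IHk. Qed.

Lemma sumN_double K f : sumN (K + K) f = sumN K (fun i => f (2 * i)%nat) + sumN K (fun i => f (2 * i + 1)%nat).
Proof.
  induction K; [simpl; ring|].
  replace (S K + S K)%nat with (S (S (K + K))) by lia. cbn [sumN]. rewrite IHK.
  replace (S (K + K)) with (2 * K + 1)%nat by lia. replace (K + K)%nat with (2 * K)%nat by lia. ring.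
Qed.

Lemma sum_pat n : forall F, dep n F -> sumN (2 ^ n) (fun i => F (pat i)) = INR (2 ^ n) * Eavg n F.
Proof.
  induction n; intros F D.
  - simpl. rewrite (D (pat 0) (fun _ => 0)) by lia. ring.
  - replace (2 ^ S n)%nat with (2 ^ n + 2 ^ n)%nat by (simpl; lia).
    rewrite sumN_double.
    rewrite (sumN_ext _ (fun i => F (pat (2 * i)%nat)) (fun i => (fun e => F (cns 1 e)) (pat i))) by (intros; rewrite pat_even; auto).
    rewrite (sumN_ext _ (fun i => F (pat (2 * i + 1)%nat)) (fun i => (fun e => F (cns (-1) e)) (pat i))) by (intros; rewrite pat_odd; auto).
    rewrite (IHn (fun e => F (cns 1 e))), (IHn (fun e => F (cns (-1) e))) by (apply dep_cns; auto). rewrite plus_INR. cbn [Eavg]. field.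
Qed.

Definition upd (y : nat -> R) (k : nat) (z : R) : nat -> R := fun j => if Nat.eq_dec j k then z else y j.

Definition Psi (q : R) (n : nat) (a : nat -> R) (y : nat -> R) : R :=
  Eavg n (fun ep => rpow (Rabs (sumN n (fun j => a (S j) * y j * ep j))) q).

Lemma abs_rpow_convex q u v l : 1 <= q -> 0 <= l <= 1 ->
  rpow (Rabs (l * u + (1 - l) * v)) q <= l * rpow (Rabs u) q + (1 - l) * rpow (Rabs v) q.
Proof.
  intros Hq Hl. eapply Rle_trans; [apply rpow_mono with (y := l * Rabs u + (1 - l) * Rabs v)|].
  - eapply Rle_trans; [apply Rabs_triang|]. rewrite !Rabs_mult, (Rabs_pos_eq l), (Rabs_pos_eq (1 - l)) by lra. lra.
  - apply Rabs_pos.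
  - lra.
  - apply rpow_convex; auto; apply Rabs_pos.
Qed.

Lemma Psi_convex q n a y k u v l : 1 <= q -> 0 <= l <= 1 ->
  Psi q n a (upd y k (l * u + (1 - l) * v)) <= l * Psi q n a (upd y k u) + (1 - l) * Psi q n a (upd y k v).
Proof.
  intros Hq Hl. unfold Psi. rewrite <- !Eavg_scal, <- Eavg_plus. apply Eavg_le. intros ep.
  rewrite (sumN_ext n (fun j => a (S j) * upd y k (l * u + (1 - l) * v) j * ep j)
    (fun j => l * (a (S j) * upd y k u j * ep j) + (1 - l) * (a (S j) * upd y k v j * ep j))).
  2:{ intros j _. unfold upd. destruct Nat.eq_dec; ring. }
  rewrite sumN_plus, !sumN_scal. apply abs_rpow_convex; auto.
Qed.

Lemma Psi_sign q n a s : (forall k, s k = 1 \/ s k = -1) -> Psi q n a s = Psi q n a (fun _ => 1).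
Proof.
  intros Hs. unfold Psi.
  rewrite (Eavg_ext n _ (fun ep => (fun e => rpow (Rabs (sumN n (fun j => a (S j) * 1 * e j))) q) (fun k => s k * ep k))).
  2:{ intros ep. f_equal. f_equal. apply sumN_ext. intros; ring. }
  apply (Eavg_sign n (fun e => rpow (Rabs (sumN n (fun j => a (S j) * 1 * e j))) q) s Hs).
Qed.

Lemma Psi_box q n a y : 1 <= q -> (forall j, Rabs (y j) <= 1) -> Psi q n a y <= Psi q n a (fun _ => 1).
Proof.
  intros Hq.
  assert (Q : forall k y, (forall j, Rabs (y j) <= 1) -> (forall j, (k <= j)%nat -> y j = 1 \/ y j = -1) -> Psi q n a y <= Psi q n a (fun _ => 1)).
  { induction k; intros y0 Hb Hs.
    - rewrite Psi_sign; [lra|]. intros; apply Hs; lia.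
    - set (l := (1 + y0 k) / 2).
      assert (Hl : 0 <= l <= 1) by (pose proof (Hb k) as Hk; unfold l; revert Hk; unfold Rabs; destruct Rcase_abs; lra).
      assert (E : y0 = upd y0 k (l * 1 + (1 - l) * -1)).
      { apply functional_extensionality. intros j. unfold upd, l. destruct Nat.eq_dec; [subst; field|auto]. }
      rewrite E. eapply Rle_trans; [apply Psi_convex; auto|].
      assert (forall z, Rabs z <= 1 -> (z = 1 \/ z = -1) -> Psi q n a (upd y0 k z) <= Psi q n a (fun _ => 1)).
      { intros z Hz Hz'. apply IHk.
        - intros j. unfold upd. destruct Nat.eq_dec; auto.
        - intros j Hj. unfold upd. destruct Nat.eq_dec; auto. apply Hs. lia. }
      pose proof (H 1 ltac:(rewrite Rabs_R1; lra) ltac:(auto)).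
      pose proof (H (-1) ltac:(rewrite Rabs_m1; lra) ltac:(auto)). nra. }
  intros Hb. set (y' := fun j => if Compare_dec.lt_dec j n then y j else 1).
  replace (Psi q n a y) with (Psi q n a y').
  - apply (Q n). intros j; unfold y'; destruct Compare_dec.lt_dec; auto; rewrite Rabs_R1; lra.
    intros j Hj; unfold y'; destruct Compare_dec.lt_dec; auto; lia.
  - unfold Psi. apply Eavg_ext. intros ep. f_equal. f_equal. apply sumN_ext. intros j Hj. unfold y'.
    destruct Compare_dec.lt_dec; auto; lia.
Qed.

Lemma Psi_one q n a : Psi q n a (fun _ => 1) = Eavg n (fun ep => rpow (Rabs (Ssum n a ep)) q).
Proof. unfold Psi, Ssum. apply Eavg_ext. intros ep. f_equal. f_equal. apply sumN_ext. intros; ring. Qed.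

Lemma sumN_plus_neg n f g : sumN n (fun i => f i + - g i) = sumN n f + - sumN n g.
Proof. induction n; simpl; [ring|]. rewrite IHn; ring. Qed.

Definition Tgen (c : nat -> nat -> R) (N M : nat) : seqR -> seqR -> R :=
  fun x y => sumN N (fun i => sumN M (fun j => c i j * x i * y j)).

Lemma Tgen_bil p c N M : bilinear p (Tgen c N M).
Proof.
  split; intros; unfold Tgen, sadd, sscal.
  - rewrite <- sumN_scal, <- sumN_plus. apply sumN_ext. intros i _.
    rewrite <- sumN_scal, <- sumN_plus. apply sumN_ext. intros; ring.
  - rewrite <- sumN_scal, <- sumN_plus. apply sumN_ext. intros i _.
    rewrite <- sumN_scal, <- sumN_plus. apply sumN_ext. intros; ring.
Qed.

Lemma coord_le p (hp : p_ge2 p) d r : norm_le p d r -> forall i, Rabs (d i) <= r.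
Proof.
  intros [Hr H] i. destruct p as [p|]; simpl in *; auto.
  specialize (H (S i)). simpl in H.
  pose proof (sumN_ge0 i (fun k => rpow (Rabs (d k)) p) ltac:(intros; apply rpow_ge0)).
  apply (rpow_le_inv _ _ p); try lra; apply Rabs_pos.
Qed.

Lemma sumN_abs_ge n f i : (i < n)%nat -> Rabs (f i) <= sumN n (fun k => Rabs (f k)).
Proof. intros. apply (sumN_ge_term n (fun k => Rabs (f k))); auto. intros; apply Rabs_pos. Qed.

Lemma Tgen_cont p (hp : p_ge2 p) c N M : continuous_bil p (Tgen c N M).
Proof.
  intros x y Hx Hy eps He.
  set (C := sumN N (fun i => sumN M (fun j => Rabs (c i j)))).
  assert (HC : 0 <= C) by (apply sumN_ge0; intros; apply sumN_ge0; intros; apply Rabs_pos).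
  set (B := sumN N (fun i => Rabs (x i)) + sumN M (fun j => Rabs (y j))).
  assert (HBx : forall i, (i < N)%nat -> Rabs (x i) <= B).
  { intros i Hi. pose proof (sumN_abs_ge N x i Hi). pose proof (sumN_ge0 M (fun j => Rabs (y j)) ltac:(intros; apply Rabs_pos)). unfold B; lra. }
  assert (HBy : forall j, (j < M)%nat -> Rabs (y j) <= B).
  { intros j Hj. pose proof (sumN_abs_ge M y j Hj). pose proof (sumN_ge0 N (fun i => Rabs (x i)) ltac:(intros; apply Rabs_pos)). unfold B; lra. }
  assert (HB : 0 <= B) by (unfold B; apply Rplus_le_le_0_compat; apply sumN_ge0; intros; apply Rabs_pos).
  set (K := 2 * (C + 1) * (2 * B + 1)).
  assert (HK : 0 < K) by (unfold K; nra).
  exists (Rmin 1 (eps / K)). split.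
  { apply Rmin_pos; [lra|apply div_gt0; auto]. }
  intros x' y' _ _ Nx Ny.
  set (d := Rmin 1 (eps / K)) in *.
  assert (Hd1 : d <= 1) by apply Rmin_l. assert (Hd2 : d <= eps / K) by apply Rmin_r.
  assert (Hd0 : 0 < d) by (apply Rmin_pos; [lra|apply div_gt0; auto]).
  pose proof (coord_le p hp _ _ Nx) as Dx. pose proof (coord_le Inf I _ _ Ny) as Dy.
  unfold sadd, sopp in Dx, Dy.
  assert (P : forall i j, (i < N)%nat -> (j < M)%nat -> Rabs (x' i * y' j - x i * y j) <= d * (2 * B + 1)).
  { intros i j Hi Hj.
    replace (x' i * y' j - x i * y j) with ((x' i + - x i) * y' j + x i * (y' j + - y j)) by ring.
    eapply Rle_trans; [apply Rabs_triang|]. rewrite !Rabs_mult.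
    specialize (Dx i). specialize (Dy j). pose proof (HBx i Hi). pose proof (HBy j Hj).
    assert (Rabs (y' j) <= B + 1).
    { replace (y' j) with ((y' j + - y j) + y j) by ring. eapply Rle_trans; [apply Rabs_triang|]. lra. }
    pose proof (Rabs_pos (x' i + - x i)). pose proof (Rabs_pos (y' j)). pose proof (Rabs_pos (x i)).
    pose proof (Rabs_pos (y' j + - y j)). nra. }
  unfold Tgen, Rminus. rewrite <- sumN_plus_neg.
  eapply Rle_lt_trans; [apply sumN_abs|].
  eapply Rle_lt_trans.
  { apply sumN_le. intros i Hi. rewrite <- sumN_plus_neg. eapply Rle_trans; [apply sumN_abs|].
    apply sumN_le. intros j Hj.
    replace (c i j * x' i * y' j + - (c i j * x i * y j)) with (c i j * (x' i * y' j - x i * y j)) by ring.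
    rewrite Rabs_mult. apply Rmult_le_compat_l; [apply Rabs_pos|]. apply P; auto. }
  rewrite (sumN_ext N _ (fun i => (d * (2 * B + 1)) * sumN M (fun j => Rabs (c i j)))).
  2:{ intros. rewrite <- sumN_scal. apply sumN_ext; intros; ring. }
  rewrite sumN_scal. fold C.
  assert (d * K <= eps) by (apply Rmult_le_reg_r with (/ K); [apply Rinv_0_lt_compat; auto|];
     replace (d * K * / K) with d by (field; lra); auto).
  unfold K in H. nra.
Qed.

Definition wgt (q : R) (n : nat) : R := / rpow (INR (2 ^ n)) (1 / q).
Definition cc (q : R) (n : nat) (a : nat -> R) (i j : nat) : R := wgt q n * pat i j * a (S j).
Definition Tc (q : R) (n : nat) (a : nat -> R) := Tgen (cc q n a) (2 ^ n) n.

Lemma Npos n : 0 < INR (2 ^ n).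
Proof. apply lt_0_INR. apply Nat.neq_0_lt_0. apply Nat.pow_nonzero. lia. Qed.

Lemma wgt_pos q n : 0 < wgt q n.
Proof. unfold wgt. apply Rinv_0_lt_compat, rpow_gt0, Npos. Qed.

Lemma wgt_q q n : 0 < q -> rpow (wgt q n) q = / INR (2 ^ n).
Proof.
  intros Hq. unfold wgt. rewrite rpow_inv' by (apply rpow_gt0, Npos).
  rewrite rpow_mult by (left; apply Npos). replace (1 / q * q) with 1 by (field; lra).
  rewrite rpow_1; auto. left; apply Npos.
Qed.

Lemma abs_pat i j : Rabs (pat i j) = 1.
Proof. destruct (pat_sign i j) as [h|h]; rewrite h; [apply Rabs_R1|apply Rabs_m1]. Qed.

Lemma sum_delta N k f : (k < N)%nat -> sumN N (fun i => f i * e k i) = f k.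
Proof.
  induction N; intros Hk; [lia|]. simpl.
  destruct (Nat.eq_dec k N).
  - subst. rewrite (sumN_ext N _ (fun _ => 0)), sumN_zero. unfold e. destruct Nat.eq_dec; [ring|lia].
    intros i Hi. unfold e. destruct Nat.eq_dec; [lia|ring].
  - rewrite IHN by lia. unfold e. destruct Nat.eq_dec; [lia|ring].
Qed.

Lemma Tc_e q n a i j : (i < 2 ^ n)%nat -> (j < n)%nat -> Tc q n a (e i) (e j) = cc q n a i j.
Proof.
  intros Hi Hj. unfold Tc, Tgen.
  rewrite (sumN_ext (2 ^ n) _ (fun i0 => (cc q n a i0 j) * e i i0)).
  - apply (sum_delta (2 ^ n) i (fun i0 => cc q n a i0 j)); auto.
  - intros i0 _.
    apply (sum_delta n j (fun j0 => cc q n a i0 j0 * e i i0)); auto.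
Qed.

Lemma ball_zero p : in_ball p (fun _ => 0).
Proof.
  split; [apply in_X_zero|]. split; [lra|]. destruct p; simpl; intros; [|rewrite Rabs_R0; lra].
  rewrite rpow_1l, (sumN_ext N _ (fun _ => 0)), sumN_zero; [lra|]. intros. rewrite Rabs_R0, rpow_0; auto.
Qed.

Lemma Tc_bound p (hp : p_ge2 p) n a x y : in_ball p x -> in_ball Inf y ->
  Rabs (Tc (qexp p) n a x y) <= Rnorm (qexp p) n a.
Proof.
  intros Hx Hy. pose proof (qexp_range p hp) as Hq. set (q := qexp p) in *.
  set (b := fun i => wgt q n * sumN n (fun j => a (S j) * y j * pat i j)).
  assert (E : Tc q n a x y = sumN (2 ^ n) (fun i => x i * b i)).
  { unfold Tc, Tgen, b. apply sumN_ext. intros i _. rewrite <- !sumN_scal. apply sumN_ext. intros j _. unfold cc. ring. }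
  rewrite E. eapply Rle_trans; [apply holder; eauto|]. fold q.
  unfold qnorm, Rnorm. apply rpow_mono; [|apply sumN_rpow_ge0|apply div_ge0; lra].
  rewrite (sumN_ext (2 ^ n) _ (fun i => / INR (2 ^ n) * (fun ep => rpow (Rabs (sumN n (fun j => a (S j) * y j * ep j))) q) (pat i))).
  2:{ intros i _. unfold b. rewrite Rabs_mult, rpow_mul by apply Rabs_pos.
      rewrite Rabs_pos_eq by (left; apply wgt_pos). rewrite wgt_q by lra. auto. }
  rewrite sumN_scal, (sum_pat n (fun ep => rpow (Rabs (sumN n (fun j => a (S j) * y j * ep j))) q)).
  2:{ intros e1 e2 H. f_equal. f_equal. apply sumN_ext. intros. rewrite H; auto. }
  rewrite <- Rmult_assoc, Rinv_l, Rmult_1_l by (apply Rgt_not_eq, Npos).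
  fold (Psi q n a y). rewrite <- Psi_one. apply Psi_box; [lra|].
  intros j. destruct Hy as [_ Hy]. apply (coord_le Inf I y 1 Hy).
Qed.

Lemma Tc_norm p (hp : p_ge2 p) n a : exists m, bil_norm p (Tc (qexp p) n a) m /\ m <= Rnorm (qexp p) n a.
Proof.
  set (V := fun v => exists x y, in_ball p x /\ in_ball Inf y /\ v = Rabs (Tc (qexp p) n a x y)).
  assert (B : bound V).
  { exists (Rnorm (qexp p) n a). intros v [x [y [Hx [Hy E]]]]. subst. apply Tc_bound; auto. }
  assert (Ne : exists v, V v).
  { exists (Rabs (Tc (qexp p) n a (fun _ => 0) (fun _ => 0))). exists (fun _ => 0), (fun _ => 0).
    split; [apply ball_zero|]. split; [apply ball_zero|auto]. }
  destruct (completeness V B Ne) as [m Hm]. exists m. split.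
  - exact Hm.
  - apply Hm. intros v [x [y [Hx [Hy E]]]]. subst. apply Tc_bound; auto.
Qed.

Lemma pat_sq i j : pat i j ^ 2 = 1.
Proof. destruct (pat_sign i j) as [h|h]; rewrite h; ring. Qed.

Lemma sumN_const' n c : sumN n (fun _ => c) = INR n * c.
Proof. apply sumN_const. Qed.

Lemma C_lhs p (hp : p_ge2 p) n a :
  rpow (sumN (2 ^ n) (fun i => rpow (sumN n (fun j => Rabs (Tc (qexp p) n a (e i) (e j)) ^ 2)) (ex1 p))) (ex2 p)
  = sqrt (sumsq n a).
Proof.
  pose proof (qexp_range p hp) as Hq. rewrite ex1_q, ex2_q by auto. set (q := qexp p) in *.
  rewrite (sumN_ext (2 ^ n) _ (fun _ => / INR (2 ^ n) * rpow (sumsq n a) (q / 2))).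
  - rewrite sumN_const, <- Rmult_assoc, Rinv_r, Rmult_1_l by (apply Rgt_not_eq, Npos).
    rewrite rpow_mult by apply sumsq_ge0. replace (q / 2 * (1 / q)) with (1 / 2) by (field; lra).
    apply rpow_half, sumsq_ge0.
  - intros i Hi. rewrite (sumN_ext n _ (fun j => rpow (wgt q n) 2 * a (S j) ^ 2)).
    + rewrite sumN_scal. fold (sumsq n a). rewrite rpow_mul by (try apply rpow_ge0; apply sumsq_ge0).
      rewrite rpow_mult by (left; apply wgt_pos). replace (2 * (q / 2)) with q by field.
      rewrite wgt_q by lra. auto.
    + intros j Hj. rewrite Tc_e by auto. rewrite pow2_abs. unfold cc.
      rewrite rpow_2 by (left; apply wgt_pos). rewrite !Rpow_mult_distr, pat_sq. ring.
Qed.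

Lemma D_lhs p (hp : p_ge2 p) n a :
  rpow (sumN n (fun j => rpow (sumN (2 ^ n) (fun i => rpow (Rabs (Tc (qexp p) n a (e i) (e j))) (ex3 p))) (ex4 p))) (1 / 2)
  = sqrt (sumsq n a).
Proof.
  pose proof (qexp_range p hp) as Hq. rewrite ex4_q by auto. change (ex3 p) with (qexp p). set (q := qexp p) in *.
  rewrite <- rpow_half by apply sumsq_ge0. f_equal. unfold sumsq. apply sumN_ext. intros j Hj.
  rewrite (sumN_ext (2 ^ n) _ (fun _ => / INR (2 ^ n) * rpow (Rabs (a (S j))) q)).
  - rewrite sumN_const, <- Rmult_assoc, Rinv_r, Rmult_1_l by (apply Rgt_not_eq, Npos).
    rewrite rpow_mult by apply Rabs_pos. replace (q * (2 / q)) with 2 by (field; lra).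
    rewrite rpow_2 by apply Rabs_pos. apply pow2_abs.
  - intros i Hi. rewrite Tc_e by auto. unfold cc. rewrite !Rabs_mult, abs_pat, Rmult_1_r.
    rewrite rpow_mul by apply Rabs_pos. rewrite Rabs_pos_eq by (left; apply wgt_pos). rewrite wgt_q by lra. auto.
Qed.

Lemma KD_from q A : 1 <= q -> (forall n a, exists m, 0 <= m <= Rnorm q n a /\ sqrt (sumsq n a) <= A * m) -> KD q A.
Proof.
  intros Hq H.
  assert (HA : 0 < A).
  { destruct (H 1%nat (fun _ => 1)) as [m [Hm Hs]].
    replace (sumsq 1 (fun _ => 1)) with 1 in Hs by (unfold sumsq; simpl; ring). rewrite sqrt_1 in Hs.
    destruct (Rlt_le_dec 0 A); auto. nra. }
  intros n a. destruct (H n a) as [m [Hm Hs]].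
  eapply Rle_trans; [exact Hs|]. apply Rmult_le_compat_l; lra.
Qed.

Lemma C_lower p (hp : p_ge2 p) A : C_ineq p A -> KD (qexp p) A.
Proof.
  intros HC. apply KD_from; [apply qexp_range; auto|]. intros n a.
  destruct (Tc_norm p hp n a) as [m [Hm Hle]]. exists m. split; [split; auto; eapply bil_norm_ge0; eauto|].
  rewrite <- (C_lhs p hp n a). apply HC; auto. apply Tgen_bil. apply Tgen_cont; auto.
Qed.

Lemma D_lower p (hp : p_ge2 p) A : D_ineq p A -> KD (qexp p) A.
Proof.
  intros HD. apply KD_from; [apply qexp_range; auto|]. intros n a.
  destruct (Tc_norm p hp n a) as [m [Hm Hle]]. exists m. split; [split; auto; eapply bil_norm_ge0; eauto|].
  rewrite <- (D_lhs p hp n a). apply HD; auto. apply Tgen_bil. apply Tgen_cont; auto.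
Qed.

Theorem mainTheorem4 (p : ext) (hp : p_ge2 p) :
  exists A : R,
    is_optimal (khintchine_ineq (ex3 p)) A /\
    is_optimal (C_ineq p) A /\
    is_optimal (D_ineq p) A.
Proof.
  pose proof (qexp_range p hp) as Hq.
  destruct (KD_exists (qexp p) ltac:(lra)) as [A [HA1 [HK Hmin]]].
  exists A. split; [|split].
  - split. apply khin_iff; auto. intros A' K. apply Hmin. apply khin_iff; auto.
  - split. apply C_upper; auto; lra. intros A' K. apply Hmin. apply C_lower; auto.
  - split. apply D_upper; auto; lra. intros A' K. apply Hmin. apply D_lower; auto.
Qed.
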